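(* Let $x,y,z$ be nodes of a finite, connected, unweighted, undirected graph and let $m$ be a generalized median of $\{x,y,z\}$. Then for every node $p\in I_{xm}$, $d(y,p)\geq d(y,m)$.
   Context: $d$ is the shortest-path distance; $I_{xm}=\{w: d(x,w)+d(w,m)=d(x,m)\}$. A generalized median of $\{x,y,z\}$ is a node minimizing $d(u,x)+d(u,y)+d(u,z)$ over all nodes $u$. *)

(* Defs.v *)
(* A finite undirected unweighted graph is a symmetric,
   irreflexive relation e on a finType T. *)
From mathcomp Require Import all_boot.
Set Implicit Arguments. Unset Strict Implicit. Unset Printing Implicit Defensive.

Section Graph.
Variables (T : finType) (e : rel T).

Definition walkb (n : nat) (x y : T) : bool :=
  [exists p : n.-tuple T, path e x p && (last x p == y)].

(* shortest-path distance: least n with a walk of length n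
   (for a connected graph this is always < #|T|) *)
Definition gdist (x y : T) : nat :=
  find (fun n => walkb n x y) (iota 0 #|T|).

Definition interval (x m : T) : {set T} :=
  [set w | gdist x w + gdist w m == gdist x m].

Definition gen_median (x y z m : T) : Prop :=
  forall u : T, gdist m x + gdist m y + gdist m z <= gdist u x + gdist u y + gdist u z.

Definition connected_graph : Prop := forall x y : T, connect e x y.
End Graph.

(* Main.v *)
Require Import Defs.
From mathcomp Require Import all_boot.
From mathcomp Require Import zify.
Set Implicit Arguments.

Section G.
Variables (T : finType) (e : rel T).
Hypothesis e_sym : symmetric e.
Hypothesis e_conn : connected_graph e.

Lemma walkbP n x y : reflect (exists p, [/\ size p = n, path e x p & last x p = y]) (walkb e n x y).
Proof.
apply: (iffP existsP).
  by case=> t /andP[Hp /eqP Hl]; exists (val t); rewrite size_tuple.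
case=> p [Hs Hp Hl]; have Hs' : size p == n by rewrite Hs.
by exists (Tuple Hs'); rewrite /= Hp Hl eqxx.
Qed.

Lemma walk_cat {n k x y z} : walkb e n x y -> walkb e k y z -> walkb e (n + k) x z.
Proof.
move=> /walkbP[p [Hs Hp Hl]] /walkbP[q [Hs' Hq Hl']].
apply/walkbP; exists (p ++ q); split.
- by rewrite size_cat Hs Hs'.
- by rewrite cat_path Hp Hl Hq.
- by rewrite last_cat Hl.
Qed.

Lemma walk_rev {n x y} : walkb e n x y -> walkb e n y x.
Proof.
move=> /walkbP[p [Hs Hp Hl]]; apply/walkbP.
exists (rev (belast x p)); split.
- by rewrite size_rev size_belast.
- rewrite -Hl rev_path.
  have Heq : (fun z => e^~ z) =2 e by move=> a b /=; rewrite e_sym.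
  by rewrite (eq_path Heq).
- case: p {Hs Hp} Hl => [|a q] /= Hl; first by [].
  by rewrite rev_cons last_rcons.
Qed.

Lemma conn_walk x y : exists2 n, n < #|T| & walkb e n x y.
Proof.
have /connectP[p Hp ->] := e_conn x y.
case: (shortenP Hp) => p' Hp' Hu _.
exists (size p'); last by apply/walkbP; exists p'.
by have := max_card (mem (x :: p')); rewrite (card_uniqP Hu).
Qed.

Lemma gdist_spec x y : gdist e x y < #|T| /\ walkb e (gdist e x y) x y.
Proof.
have [n Hn Hw] := conn_walk x y.
have Hhas : has (fun n => walkb e n x y) (iota 0 #|T|).
  by apply/hasP; exists n => //; rewrite mem_iota.
have Hlt : gdist e x y < #|T| by rewrite /gdist -{2}(size_iota 0 #|T|) -has_find.
split=> //.
have := nth_find 0 Hhas; rewrite nth_iota //.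
Qed.

Lemma gdist_le {n x y} : walkb e n x y -> gdist e x y <= n.
Proof.
move=> Hw; have [Hlt _] := gdist_spec x y.
case: (leqP #|T| n) => Hn; first by apply: ltnW; apply: leq_trans Hlt Hn.
rewrite leqNgt; apply/negP => H.
have := before_find 0 H; rewrite nth_iota // add0n Hw //.
Qed.

Lemma gdistC x y : gdist e x y = gdist e y x.
Proof.
apply/eqP; rewrite eqn_leq.
have [_ H1] := gdist_spec x y; have [_ H2] := gdist_spec y x.
by rewrite (gdist_le (walk_rev H1)) (gdist_le (walk_rev H2)).
Qed.

Lemma gdist_tri x y z : gdist e x z <= gdist e x y + gdist e y z.
Proof.
have [_ H1] := gdist_spec x y; have [_ H2] := gdist_spec y z.
exact: gdist_le (walk_cat H1 H2).
Qed.
End G.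

Theorem lemmaE3 (T : finType) (e : rel T)
  (e_sym : symmetric e) (e_irr : irreflexive e)
  (e_conn : connected_graph e)
  (x y z m : T) (hm : gen_median e x y z m) :
  forall p : T, p \in interval e x m -> gdist e y m <= gdist e y p.
Proof.
move=> p; rewrite inE => /eqP Hi.
have H := hm p.
have Ht := gdist_tri e_conn p m z.
rewrite (gdistC e_sym e_conn m x) (gdistC e_sym e_conn p x) in H.
rewrite (gdistC e_sym e_conn y m) (gdistC e_sym e_conn y p).
rewrite -Hi in H.
have Hpm := gdistC e_sym e_conn p m.
lia.
Qed.
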